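(* Let $R$ be a local ring and $R\subset S$ a flat ring extension. Then $\widetilde R=R_{[\Delta(R)]}=R_\Sigma$, where $\Sigma:=\Delta(R)\cap\mathrm U(S)$ and $\widetilde R$ is the Prüfer hull of $R$ in $S$.
   Context: All rings are commutative with identity; ''local'' means having a unique maximal ideal (no Noetherian hypothesis). A strong divisor of a local ring $R$ is a regular element (non-zero-divisor) $t\in R$ such that the ideal $Rt$ is comparable under inclusion with every ideal of $R$; $\Delta(R)$ denotes the set of strong divisors of $R$ (a saturated multiplicatively closed subset containing the units). $\mathrm U(S)$ is the group of units of $S$. An extension $A\subseteq B$ is Prüfer if $A\subseteq C$ is a flat epimorphism for every $R$-subalgebra $C$ of $B$ containing $A$. The Prüfer hull $\widetilde R$ of $R$ in $S$ is the largest $T\in[R,S]$ such that $R\subseteq T$ is Prüfer. For a multiplicatively closed subset $\Delta$ of $R$, the large quotient ring $R_{[\Delta]}$ (in $S$) is the set of $x\in S$ such that $sx\in R$ for some $s\in\Delta$. $R_\Sigma$ is the localization, which embeds in $S$ since $\Sigma\subseteq\mathrm U(S)$. *)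

(* Defs.v *)
From HB Require Import structures.
From mathcomp Require Import all_boot all_order all_algebra.
Set Implicit Arguments. Unset Strict Implicit. Unset Printing Implicit Defensive.
Import GRing.Theory.
Local Open Scope ring_scope.

(* Convention: a fixed commutative ring S; subrings of S (R, and the
   elements T of [R,S]) are represented as Prop-valued predicates on S. *)

Section Defs.
Variable S : comPzRingType.

Definition subset (A B : S -> Prop) := forall x, A x -> B x.
Definition same_set (A B : S -> Prop) := forall x, A x <-> B x.

Definition is_subring (A : S -> Prop) :=
  [/\ A 0, A 1, (forall x y, A x -> A y -> A (x - y)),
      (forall x y, A x -> A y -> A (x + y)) & (forall x y, A x -> A y -> A (x * y))].

Definition is_ideal (R I : S -> Prop) :=
  [/\ subset I R, I 0, (forall x y, I x -> I y -> I (x + y))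
    & (forall r x, R r -> I x -> I (r * x))].

Definition is_maximal_ideal (R I : S -> Prop) :=
  [/\ is_ideal R I, ~ I 1 &
      (forall J, is_ideal R J -> ~ J 1 -> subset I J -> same_set I J)].

Definition is_local (R : S -> Prop) :=
  exists M, is_maximal_ideal R M /\
    forall N, is_maximal_ideal R N -> same_set N M.

Definition regular (R : S -> Prop) (t : S) :=
  R t /\ forall x, R x -> t * x = 0 -> x = 0.

Definition principal (R : S -> Prop) (t : S) : S -> Prop :=
  fun x => exists r, R r /\ x = r * t.

Definition strong_divisor (R : S -> Prop) (t : S) :=
  regular R t /\
  forall I, is_ideal R I -> subset (principal R t) I \/ subset I (principal R t).

Definition unitS (s : S) := exists u, s * u = 1.

Definition large_quotient (R D : S -> Prop) : S -> Prop :=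
  fun x => exists s, D s /\ R (s * x).

(* image in S of the localization R_Sigma (Sigma consists of units of S) *)
Definition localization_in (R Sigma : S -> Prop) : S -> Prop :=
  fun x => exists r s u, [/\ R r, Sigma s, s * u = 1 & x = r * u].

(* flatness of the extension A ⊆ C (C an A-module), via the equational
   criterion of flatness *)
Definition is_flat (A C : S -> Prop) :=
  forall (n : nat) (a x : 'I_n -> S),
    (forall i, A (a i)) -> (forall i, C (x i)) ->
    \sum_(i < n) a i * x i = 0 ->
    exists (m : nat) (y : 'I_m -> S) (c : 'I_n -> 'I_m -> S),
      [/\ (forall k, C (y k)), (forall i k, A (c i k)),
          (forall i, x i = \sum_(k < m) c i k * y k) &
          (forall k, \sum_(i < n) a i * c i k = 0)].

Definition morph_on (C : S -> Prop) (T : comPzRingType) (f : S -> T) :=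
  [/\ f 1 = 1, (forall x y, C x -> C y -> f (x + y) = f x + f y)
    & (forall x y, C x -> C y -> f (x * y) = f x * f y)].

Definition is_epi (A C : S -> Prop) :=
  forall (T : comPzRingType) (f g : S -> T),
    morph_on C f -> morph_on C g -> (forall a, A a -> f a = g a) ->
    forall c, C c -> f c = g c.

Definition flat_epi (A C : S -> Prop) := is_flat A C /\ is_epi A C.

Definition is_Prufer (A B : S -> Prop) :=
  forall C, is_subring C -> subset A C -> subset C B -> flat_epi A C.

Definition is_Prufer_hull (R H : S -> Prop) :=
  [/\ is_subring H, subset R H, is_Prufer R H &
      forall T, is_subring T -> subset R T -> is_Prufer R T -> subset T H].

End Defs.

(* Main.v *)
Require Import Defs.
From HB Require Import structures.
From mathcomp Require Import all_boot all_order all_algebra.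
From mathcomp Require Import generic_quotient ring_quotient.
From mathcomp Require Import boolp.
From mathcomp Require classical_sets.
From Stdlib Require Import Classical.
From mathcomp Require Import ring zify.
Set Implicit Arguments. Unset Strict Implicit. Unset Printing Implicit Defensive.
Import GRing.Theory.
Local Open Scope ring_scope.
Section Basic.
Variable S : comPzRingType.
Implicit Types A : S -> Prop.

Lemma sr0 A : is_subring A -> A 0. Proof. by case. Qed.
Lemma sr1 A : is_subring A -> A 1. Proof. by case. Qed.
Lemma srB A : is_subring A -> forall x y, A x -> A y -> A (x - y). Proof. by case. Qed.
Lemma srD A : is_subring A -> forall x y, A x -> A y -> A (x + y). Proof. by case. Qed.
Lemma srM A : is_subring A -> forall x y, A x -> A y -> A (x * y). Proof. by case. Qed.
Lemma srN A : is_subring A -> forall x, A x -> A (- x).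
Proof. move=> h x hx; rewrite -sub0r; apply: srB => //; exact: sr0. Qed.
Lemma sr_sum A (I : Type) (r : seq I) (P : pred I) (F : I -> S) :
  is_subring A -> (forall i, P i -> A (F i)) -> A (\sum_(i <- r | P i) F i).
Proof. move=> h hF; apply: (big_ind A) => //; [exact: sr0| exact: srD]. Qed.
Lemma sr_exp A x n : is_subring A -> A x -> A (x ^+ n).
Proof.
move=> h hx; elim: n => [|n IH]; first by rewrite expr0; exact: sr1.
by rewrite exprS; exact: srM.
Qed.
Lemma sr_nat A (b : bool) : is_subring A -> A (b%:R).
Proof. by move=> h; case: b => /=; [rewrite mulr1n; exact: sr1| exact: sr0]. Qed.

Variable R : S -> Prop.
Implicit Types I : S -> Prop.
Lemma id_sub I x : is_ideal R I -> I x -> R x. Proof. by case=> h _ _ _; exact: h. Qed.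
Lemma id0 I : is_ideal R I -> I 0. Proof. by case. Qed.
Lemma idD I x y : is_ideal R I -> I x -> I y -> I (x + y). Proof. by case=> _ _ h _; exact: h. Qed.
Lemma idM I r x : is_ideal R I -> R r -> I x -> I (r * x). Proof. by case=> _ _ _ h; exact: h. Qed.
Lemma idMr I r x : is_ideal R I -> R r -> I x -> I (x * r). Proof. by move=> *; rewrite mulrC; exact: idM. Qed.
Lemma id_sum I (J : Type) (r : seq J) (P : pred J) (F : J -> S) :
  is_ideal R I -> (forall i, P i -> I (F i)) -> I (\sum_(i <- r | P i) F i).
Proof. move=> h hF; apply: (big_ind I) => //; [exact: id0| move=> *; exact: idD]. Qed.

Lemma principal_ideal r : is_subring R -> R r -> is_ideal R (principal R r).
Proof.
move=> hR hr; split.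
- by move=> _ [a [ha ->]]; exact: srM.
- by exists 0; split; [exact: sr0| rewrite mul0r].
- by move=> _ _ [a [ha ->]] [b [hb ->]]; exists (a + b); split; [exact: srD| rewrite mulrDl].
- by move=> c _ hc [a [ha ->]]; exists (c * a); split; [exact: srM| rewrite mulrA].
Qed.
End Basic.

Section Local.
Variable S : comPzRingType.
Variables R M : S -> Prop.
Hypothesis HR : is_subring R.
Hypothesis HM : is_maximal_ideal R M.
Hypothesis Huniq : forall N, is_maximal_ideal R N -> same_set N M.

Lemma M_ideal : is_ideal R M. Proof. by case: HM. Qed.
Lemma M_not1 : ~ M 1. Proof. by case: HM. Qed.

Lemma unit_notM c : R c -> ~ M c -> exists c', R c' /\ c * c' = 1.
Proof.
move=> hc hMc; apply: NNPP => hno.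
pose Pr := fun I : S -> Prop => I = (fun _ => False) \/
   [/\ is_ideal R I, ~ I 1 & forall r, R r -> I (r * c)].
have Pid : forall I t, Pr I -> I t -> [/\ is_ideal R I, ~ I 1 & forall r, R r -> I (r * c)].
  by move=> I t [->|//].
have [A [PA Amax]] : exists A, Pr A /\ forall B, classical_sets.proper A B -> ~ Pr B.
  apply: classical_sets.Zorn_bigcup => F FP Ftot.
  case: (classic (exists X, F X /\ exists t, X t)) => [[X0 [FX0 [t0 X0t0]]]|hne]; last first.
    left; apply/funext => t; apply/propext; split => // -[X FX Xt].
    by apply: hne; exists X; split => //; exists t.
  have [X0id X01 X0c] := Pid _ _ (FP _ FX0) X0t0.
  rewrite /Pr /classical_sets.bigcup /classical_sets.mkset /=.
  right; split.
  - split.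
    + by move=> t [X FX Xt]; have [Xi _ _] := Pid _ _ (FP _ FX) Xt; exact: id_sub Xi Xt.
    + by exists X0 => //; exact: id0 X0id.
    + move=> a b [X FX Xa] [Y FY Yb].
      have [Xi _ _] := Pid _ _ (FP _ FX) Xa; have [Yi _ _] := Pid _ _ (FP _ FY) Yb.
      case: (Ftot _ _ FX FY) => hXY.
        by exists Y => //; apply: idD Yi (hXY _ Xa) Yb.
      by exists X => //; apply: idD Xi Xa (hXY _ Yb).
    + move=> r a hr [X FX Xa]; have [Xi _ _] := Pid _ _ (FP _ FX) Xa.
      by exists X => //; exact: idM Xi hr Xa.
  - by move=> [X FX X1]; have [_ h _] := Pid _ _ (FP _ FX) X1.
  - by move=> r hr; exists X0 => //; exact: X0c.
pose Rc := fun y => exists r, R r /\ y = r * c.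
have PRc : Pr Rc.
  right; split.
  - split.
    + by move=> _ [r [hr ->]]; exact: srM.
    + by exists 0; split; [exact: sr0| rewrite mul0r].
    + by move=> _ _ [a [ha ->]] [b [hb ->]]; exists (a + b); split; [exact: srD| rewrite mulrDl].
    + by move=> d _ hd [a [ha ->]]; exists (d * a); split; [exact: srM| rewrite mulrA].
  - by move=> [r [hr h1]]; apply: hno; exists r; split => //; rewrite mulrC.
  - by move=> r hr; exists r.
case: PA => [A0|[Aid A1 Ac]].
  apply: (Amax Rc) => //; rewrite A0; split => // hsub.
  by apply: (hsub 0); exists 0; split; [exact: sr0| rewrite mul0r].
have Amaxi : is_maximal_ideal R A.
  split => // J Jid J1 AJ.
  case: (classic (forall t, J t -> A t)) => hJA.
    by move=> t; split; [exact: AJ| exact: hJA].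
  exfalso; apply: (Amax J); first by split.
  by right; split => // r hr; apply: AJ; exact: Ac.
have := (Huniq Amaxi c).1; rewrite -[c]mul1r; move=> /(_ (Ac _ (sr1 HR))).
by rewrite mul1r.
Qed.

Lemma unit_1M m : M m -> exists w, R w /\ (1 - m) * w = 1.
Proof.
move=> hm; apply: unit_notM.
  by apply: srB => //; [exact: sr1| exact: id_sub M_ideal hm].
move=> h; apply: M_not1; have := idD M_ideal h hm; by rewrite subrK.
Qed.

Lemma M_R m : M m -> R m. Proof. exact: id_sub M_ideal. Qed.
Lemma S10 : (1 : S) != 0.
Proof. apply/eqP => h; apply: M_not1; rewrite h; exact: id0 M_ideal. Qed.
End Local.
Section DeltaH.
Variable S : comPzRingType.
Variable R : S -> Prop.
Hypothesis HR : is_subring R.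
Hypothesis Hflat : is_flat R (fun _ => True).
Local Notation D := (strong_divisor R).
Local Notation H := (large_quotient R (strong_divisor R)).

Lemma flat_reg s : regular R s -> forall y, s * y = 0 -> y = 0.
Proof.
move=> [hs hreg] y hy.
have [|//||m [yk [c [_ hc hx hsum]]]] := @Hflat 1 (fun _ => s) (fun _ => y).
- by move=> _.
- by rewrite big_ord1.
rewrite (hx ord0) big1 // => k _.
have := hsum k; rewrite big_ord1 => /hreg -> ; first by rewrite mul0r.
exact: hc.
Qed.

Lemma D1 : D 1.
Proof.
split; first by split; [exact: sr1| move=> y _; rewrite mul1r].
move=> I hI; right; move=> y hy; exists y; split; [exact: id_sub hI hy| by rewrite mulr1].
Qed.

Lemma DM s t : D s -> D t -> D (s * t).
Proof.
move=> [[hs rs] cs] [[ht rt] ct]; split.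
  split; first exact: srM.
  by move=> y hy; rewrite -mulrA => /rs h; apply: rt => //; apply: h; exact: srM.
move=> I hI; case: (cs I hI) => hsI.
  left; move=> _ [r [hr ->]]; apply: hsI; exists (r * t); split; first exact: srM.
  by rewrite mulrA mulrAC.
pose J := fun y => R y /\ I (y * s).
have hJ : is_ideal R J.
  split.
  - by move=> y [].
  - by split; [exact: sr0| rewrite mul0r; exact: id0 hI].
  - by move=> a b [ha Ia] [hb Ib]; split; [exact: srD| rewrite mulrDl; exact: idD hI Ia Ib].
  - by move=> r a hr [ha Ia]; split; [exact: srM| rewrite -mulrA; exact: idM hI hr Ia].
case: (ct J hJ) => htJ.
  have [_ Its] : J t by apply: htJ; exists 1; split; [exact: sr1| rewrite mul1r].
  left; move=> _ [r [hr ->]]; rewrite [s * t]mulrC; exact: idM hI hr Its.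
right; move=> z hz; have [y [hy zE]] := hsI z hz.
have [r [hr yE]] : principal R t y by apply: htJ; split => //; rewrite -zE.
by exists r; split => //; rewrite zE yE mulrA mulrAC.
Qed.

Lemma V_H x : H x -> R x \/ exists a, R a /\ a * x = 1.
Proof.
move=> [s [[[hs rs] cs] hsx]].
case: (cs _ (principal_ideal HR hsx)) => h.
  have [a [ha hsa]] : principal R (s * x) s by apply: h; exists 1; split; [exact: sr1| rewrite mul1r].
  right; exists a; split => //.
  have : s * (1 - a * x) = 0 by rewrite mulrBr mulr1 {1}hsa; ring.
  move/(flat_reg (conj hs rs)) => /eqP; rewrite subr_eq0 => /eqP <-. done.
have [c [hc hE]] : principal R s (s * x) by apply: h; exists 1; split; [exact: sr1| rewrite mul1r].
left; have : s * (x - c) = 0 by rewrite mulrBr hE; ring.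
by move/(flat_reg (conj hs rs)) => /eqP; rewrite subr_eq0 => /eqP ->.
Qed.

Definition Vprop (T : S -> Prop) := forall y, T y -> R y \/ exists a, R a /\ a * y = 1.

Lemma Vinv T x a : is_subring T -> Defs.subset R T -> Vprop T -> T x -> R a -> a * x = 1 -> D a.
Proof.
move=> hT RT hV hx ha hax; split.
  split => // r hr har; by rewrite -[r]mul1r -hax mulrAC har mul0r.
move=> I hI; case: (classic (forall z, I z -> principal R a z)) => hc; first by right.
have [z [hz hnz]] : exists z, I z /\ ~ principal R a z.
  by apply: NNPP => hn; apply: hc => z hz; apply: NNPP => hn'; apply: hn; exists z.
left; case: (hV (z * x)).
- by apply: srM => //; apply: RT; exact: id_sub hI hz.
- move=> hzx; exfalso; apply: hnz; exists (z * x); split => //.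
  by rewrite -mulrA [x * a]mulrC hax mulr1.
- move=> [w [hw hwzx]] _ [r [hr ->]].
  have -> : a = w * z by rewrite -[a]mulr1 -hwzx -[w * z]mulr1 -hax; ring.
  rewrite mulrA; apply: (idM hI) => //; exact: srM.
Qed.

Lemma H_sub : is_subring H.
Proof.
have h1 := D1.
split.
- by exists 1; split => //; rewrite mulr0; exact: sr0.
- by exists 1; split => //; rewrite mulr1; exact: sr1.
- move=> x y [s [hs hsx]] [t [ht hty]]; exists (s * t); split; first exact: DM.
  have -> : s * t * (x - y) = t * (s * x) - s * (t * y) by ring.
  have hsR := hs.1.1; have htR := ht.1.1.
  by apply: srB => //; apply: srM.
- move=> x y [s [hs hsx]] [t [ht hty]]; exists (s * t); split; first exact: DM.
  have -> : s * t * (x + y) = t * (s * x) + s * (t * y) by ring.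
  have hsR := hs.1.1; have htR := ht.1.1.
  by apply: srD => //; apply: srM.
- move=> x y [s [hs hsx]] [t [ht hty]]; exists (s * t); split; first exact: DM.
  have -> : s * t * (x * y) = (s * x) * (t * y) by ring.
  exact: srM.
Qed.

Lemma R_H : Defs.subset R H.
Proof. by move=> x hx; exists 1; split; [exact: D1| rewrite mul1r]. Qed.

Lemma Lmax T : is_subring T -> Defs.subset R T -> Vprop T -> Defs.subset T H.
Proof.
move=> hT RT hV x hx; case: (hV x hx) => [hr|[a [ha hax]]]; first exact: R_H.
exists a; split; first exact: (Vinv hT RT hV hx ha hax).
by rewrite hax; exact: sr1.
Qed.

Lemma decomp (C : S -> Prop) (l : seq S) : is_subring C -> Defs.subset R C -> Defs.subset C H ->
  (forall y, y \in l -> C y) ->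
  exists d u, [/\ R d, C u, d * u = 1 & forall y, y \in l -> R (d * y)].
Proof.
move=> hC RC CH; elim: l => [|y l IH] hl.
  by exists 1, 1; split; [exact: sr1| exact: sr1| rewrite mulr1| ].
have [|d [u [hd hu hdu hdl]]] := IH.
  by move=> z hz; apply: hl; rewrite inE hz orbT.
have hy : C y by apply: hl; rewrite inE eqxx.
case: (V_H (CH _ hy)) => [hry|[a [ha hay]]].
  exists d, u; split => // z; rewrite inE => /orP [/eqP ->|/hdl //].
  exact: srM.
exists (a * d), (y * u); split.
- exact: srM.
- exact: srM.
- by rewrite mulrACA hay hdu mulr1.
- move=> z; rewrite inE => /orP [/eqP ->|hz].
    by rewrite mulrAC hay mul1r.
  by rewrite -mulrA; apply: srM => //; exact: hdl.
Qed.

Lemma H_Prufer : is_Prufer R H.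
Proof.
move=> C hC RC CH; split.
  move=> n a xs ha hx hsum.
  have [|d [u [hd hu hdu hdl]]] := @decomp C [seq xs i | i <- enum 'I_n] hC RC CH.
    by move=> y /mapP [i _ ->].
  exists 1, (fun _ => u), (fun i _ => d * xs i); split => //.
  - by move=> i _; apply: hdl; apply: map_f; rewrite mem_enum.
  - by move=> i; rewrite big_ord1 mulrAC hdu mul1r.
  - move=> _; rewrite (eq_bigr (fun i => d * (a i * xs i))); last by move=> i _; ring.
    by rewrite -mulr_sumr hsum mulr0.
move=> T f g [f1 fD fM] [g1 gD gM] hfg c hc.
case: (V_H (CH _ hc)) => [hr|[a [ha hac]]]; first exact: hfg.
have hfa : f a * f c = 1 by rewrite -fM ?hac //; exact: RC.
have hga : g a * g c = 1 by rewrite -gM ?hac //; exact: RC.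
by rewrite -[f c]mulr1 -hga mulrA [f c * _]mulrC -(hfg _ ha) hfa mul1r.
Qed.

Lemma loc_eq : same_set H (localization_in R (fun s => D s /\ unitS s)).
Proof.
move=> x; split.
  move=> hx; case: (V_H hx) => [hr|[a [ha hax]]].
    exists x, 1, 1; split => //; [split; [exact: D1| by exists 1; rewrite mulr1]| by rewrite mulr1| by rewrite mulr1].
  have hD : D a := Vinv H_sub R_H V_H hx ha hax.
  exists 1, a, x; split => //; [exact: sr1| split => //; by exists x| by rewrite mul1r].
move=> [r [s [u [hr [hs _] hsu ->]]]]; exists s; split => //.
by rewrite mulrCA hsu mulr1.
Qed.
End DeltaH.
Section NZ.
Variable S : comPzRingType.
Hypothesis S10 : (1 : S) != 0.
Definition NZt (h : (1 : S) != 0) : Type := S.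
Local Notation NZ := (NZt S10).
HB.instance Definition _ := GRing.ComPzRing.on NZ.
HB.instance Definition _ := GRing.PzSemiRing_isNonZero.Build NZ S10.

Variable R : S -> Prop.
Hypothesis HR : is_subring R.

Definition RX (x : NZ) : S -> Prop :=
  fun s => exists P : {poly NZ}, (forall i, R P`_i) /\ s = P.[x].

Lemma RX_sub x : is_subring (RX x).
Proof.
split.
- by exists 0; split => [i|]; rewrite ?coef0 ?horner0 //; exact: sr0.
- exists 1; split => [i|]; rewrite ?coef1 ?hornerC //; exact: sr_nat.
- move=> _ _ [P [hP ->]] [Q [hQ ->]]; exists (P - Q); split => [i|]; last by rewrite hornerD hornerN.
  by rewrite coefB; exact: srB.
- move=> _ _ [P [hP ->]] [Q [hQ ->]]; exists (P + Q); split => [i|]; last by rewrite hornerD.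
  by rewrite coefD; exact: srD.
- move=> _ _ [P [hP ->]] [Q [hQ ->]]; exists (P * Q); split => [i|]; last by rewrite hornerM.
  by rewrite coefM; apply: sr_sum => // j _; exact: srM.
Qed.

Lemma R_RX x : Defs.subset R (RX x).
Proof.
move=> r hr; exists ((r : NZ)%:P); split => [i|]; last by rewrite hornerC.
by rewrite coefC; case: (i == 0)%N => //; exact: sr0.
Qed.

Lemma RX_x x : RX x x.
Proof.
exists 'X; split => [i|]; last by rewrite hornerX.
by rewrite coefX; exact: sr_nat.
Qed.

Lemma RX_T x (T : S -> Prop) : is_subring T -> Defs.subset R T -> T x -> Defs.subset (RX x) T.
Proof.
move=> hT RT hx _ [P [hP ->]]; rewrite horner_coef.
apply: sr_sum => // i _; apply: srM => //; [exact: RT| exact: sr_exp].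
Qed.

Variable M : S -> Prop.
Hypothesis HM : is_maximal_ideal R M.
Hypothesis Huniq : forall N, is_maximal_ideal R N -> same_set N M.

Lemma reduce (P Q : {poly NZ}) (x z : NZ) :
  (forall i, M P`_i) -> (forall i, M Q`_i) -> x * z = 1 -> P.[x] = 1 -> Q.[z] = 1 ->
  (1 < size Q)%N -> (size Q <= size P)%N ->
  exists P' : {poly NZ}, [/\ forall i, M P'`_i, P'.[x] = 1 & (size P' < size P)%N].
Proof.
move=> hP hQ hxz hPx hQz hQ1 hQP.
have hMid := M_ideal HM.
have [w [hw hvw]] := unit_1M HR HM Huniq (hQ 0%N).
set m := (size Q).-1; set n := (size P).-1.
have sQ : size Q = m.+1 by rewrite /m prednK // (ltn_trans _ hQ1).
have sP : size P = n.+1 by rewrite /n prednK // (leq_trans _ hQP) // (ltn_trans _ hQ1).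
have hmn : (m <= n)%N by rewrite -ltnS -sQ -sP.
have hm1 : (0 < m)%N by rewrite -ltnS -sQ.
pose Qr : {poly NZ} := \poly_(j < m.+1) Q`_(m - j) - 'X^m.
have Qrx : Qr.[x] = 0.
  rewrite /Qr hornerD hornerN horner_poly hornerXn; apply/eqP; rewrite subr_eq0; apply/eqP.
  have : x ^+ m * Q.[z] = x ^+ m by rewrite hQz mulr1.
  rewrite horner_coef sQ mulr_sumr => <-.
  rewrite (reindex_inj rev_ord_inj) /=; apply: eq_bigr => i _.
  have e : (m.+1 - i.+1 = m - i)%N by rewrite subSS.
  rewrite e.
  have hi : (i <= m)%N by rewrite -ltnS.
  rewrite subKn // mulrCA; congr (_ * _).
  have ex : x ^+ m = x ^+ (m - i) * x ^+ i by rewrite -exprD subnK.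
  rewrite ex -mulrA -exprMn_comm ?hxz ?expr1n ?mulr1 //.
  exact: mulrC.
have QrR : forall j, R Qr`_j.
  move=> j; rewrite /Qr coefB coef_poly coefXn; apply: srB => //; last exact: sr_nat.
  case: (j < m.+1)%N; [exact: (M_R HM (hQ _))| exact: sr0].
pose P' := P + (P`_n * w) *: ('X^(n - m) * Qr).
exists P'; split.
- move=> i; rewrite /P' coefD coefZ; refine (idD hMid (hP i) _).
  rewrite -mulrA; refine (idMr hMid _ (hP n)); apply: srM => //.
  rewrite coefXnM; case: (i < n - m)%N; [exact: sr0| exact: QrR].
- by rewrite /P' hornerD hornerZ hornerM Qrx mulr0 mulr0 addr0.
- rewrite sP ltnS; apply/leq_sizeP => j hj.
  rewrite /P' coefD coefZ coefXnM.
  have -> : (j < n - m)%N = false by apply/negbTE; rewrite -leqNgt (leq_trans (leq_subr _ _) hj).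
  rewrite /Qr coefB coef_poly coefXn.
  case: (ltngtP j n) => hjn.
  + by move: hj; rewrite leqNgt hjn.
  + rewrite nth_default ?sP // add0r.
    have h1 : (m < j - (n - m))%N by rewrite ltn_subRL subnK.
    by rewrite ltnS leqNgt h1 /= (gtn_eqF h1) subrr mulr0.
  + rewrite hjn subKn // ltnSn subnn eqxx.
    have -> : P`_n + P`_n * w * (Q`_0 - 1%:R) = P`_n * (1 - (1 - Q`_0) * w) by ring.
    by rewrite hvw subrr mulr0.
Qed.

Lemma chev N : forall (P Q : {poly NZ}) (x z : NZ), (size P + size Q < N)%N ->
  (forall i, M P`_i) -> (forall i, M Q`_i) -> x * z = 1 -> P.[x] = 1 -> Q.[z] = 1 -> False.
Proof.
elim: N => [//|N IH] P Q x z hs hP hQ hxz hPx hQz.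
wlog hle : P Q x z hs hP hQ hxz hPx hQz / (size Q <= size P)%N.
  move=> W; case: (leqP (size Q) (size P)) => h; first exact: (W P Q x z).
  apply: (W Q P z x) => //; [by rewrite addnC| by rewrite mulrC| exact: ltnW].
case: (leqP (size Q) 1) => hQ1.
  move: hQz; rewrite (size1_polyC hQ1) hornerC => h.
  by apply: (M_not1 HM); rewrite -h.
have [P' [hP' hP'x hsP']] := reduce hP hQ hxz hPx hQz hQ1 hle.
apply: (IH P' Q x z) => //.
by rewrite -ltnS (leq_trans _ hs) // ltnS ltn_add2r.
Qed.
End NZ.
Section StepB.
Variable S : comPzRingType.
Hypothesis S10 : (1 : S) != 0.
Variables R M : S -> Prop.
Hypothesis HR : is_subring R.
Hypothesis HM : is_maximal_ideal R M.
Hypothesis Huniq : forall N, is_maximal_ideal R N -> same_set N M.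
Local Notation NZ := (@NZt S S10).
Local Notation RX := (@RX S S10 R).

Definition Aprop (x : NZ) := exists n (c b : 'I_n -> S),
  (forall k, [/\ R (c k), R (c k * x) & RX x (b k)]) /\ \sum_(k < n) c k * b k = 1.

Lemma dich x : Aprop x -> R x \/ exists P : {poly NZ}, (forall i, M P`_i) /\ P.[x] = 1.
Proof.
move=> [n [c [b [hk hsum]]]].
case: (classic (exists k, ~ M (c k))) => [[k hk']|hall].
  have [hck hckx _] := hk k.
  have [c' [hc' hcc']] := unit_notM HR Huniq hck hk'.
  left; have -> : x = c' * (c k * x) by rewrite mulrA [c' * _]mulrC hcc' mul1r.
  exact: srM.
have hM : forall k, M (c k) by move=> k; apply: NNPP => h; apply: hall; exists k.
have : forall k, exists P : {poly NZ}, (forall i, R P`_i) /\ b k = P.[x].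
  by move=> k; have [_ _ h] := hk k.
move=> /fin_all_exists [Pf hPf].
right; exists (\sum_(k < n) (c k : NZ) *: Pf k); split.
  move=> i; rewrite coef_sum; apply: (id_sum _ (M_ideal HM)) => k _.
  rewrite coefZ; exact: (idMr (M_ideal HM) ((hPf k).1 i) (hM k)).
rewrite horner_sum -hsum; apply: eq_bigr => k _.
by rewrite hornerZ -(hPf k).2.
Qed.

Lemma V_T (T : S -> Prop) : is_subring T -> Defs.subset R T ->
  (forall y, T y -> Aprop y) -> Vprop R T.
Proof.
move=> hT RT hA x hx; case: (dich (hA x hx)) => [hr|[P [hP hPx]]]; first by left.
right.
have sP : (0 < size P)%N.
  rewrite lt0n size_poly_eq0; apply/eqP => hP0; move: hPx; rewrite hP0 horner0 => h.
  by move: S10; rewrite -h eqxx.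
set n := (size P).-1.
have [w [hw hvw]] := unit_1M HR HM Huniq (hP 0%N).
pose Z : {poly NZ} := (w : NZ) *: \poly_(i < n) P`_i.+1.
have hxZ : x * Z.[x] = 1.
  move: hPx; rewrite horner_coef -(prednK sP) big_ord_recl /= expr0 mulr1 => hPx.
  rewrite /Z hornerZ horner_poly mulrCA mulr_sumr.
  have -> : \sum_(i < n) x * (P`_i.+1 * x ^+ i) = 1 - P`_0.
    rewrite -hPx [P`_0 + _]addrC addrK; apply: eq_bigr => i _.
    by rewrite /bump /= add1n exprS; ring.
  by rewrite mulrC.
have TZ : T Z.[x].
  apply: (RX_T hT RT hx); exists Z; split => // i.
  rewrite coefZ coef_poly; case: (i < n)%N; last by rewrite mulr0; exact: sr0.
  apply: srM => //; exact: (M_R HM (hP _)).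
case: (dich (hA _ TZ)) => [hr|[Q [hQ hQz]]].
  by exists Z.[x]; split => //; rewrite mulrC.
exfalso; exact: (@chev S S10 R HR M HM Huniq (size P + size Q).+1 P Q x Z.[x] (ltnSn _) hP hQ hxZ hPx hQz).
Qed.
End StepB.
Section SysFlat.
Variable S : comPzRingType.
Variables A C : S -> Prop.
Hypothesis HA : is_subring A.
Hypothesis Hf : is_flat A C.

Lemma sum_swap (I J : finType) (a : I -> S) (c : I -> J -> S) (d : J -> S) :
  \sum_i a i * (\sum_j c i j * d j) = \sum_j (\sum_i a i * c i j) * d j.
Proof.
under eq_bigr do rewrite mulr_sumr.
rewrite exchange_big; apply: eq_bigr => j _; rewrite mulr_suml.
by apply: eq_bigr => i _; rewrite mulrA.
Qed.

Lemma sum_enum (I : finType) (F : I -> S) : \sum_(j < #|I|) F (enum_val j) = \sum_i F i.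
Proof. by rewrite -(big_enum_val (A := predT)). Qed.

Lemma sysflat n : forall (I : finType) (A0 : 'I_n -> I -> S) (u : I -> S),
  (forall e i, A (A0 e i)) -> (forall i, C (u i)) -> (forall e, \sum_i A0 e i * u i = 0) ->
  exists K (c : I -> 'I_K -> S) (b : 'I_K -> S),
  [/\ forall i k, A (c i k), forall k, C (b k), forall i, u i = \sum_k c i k * b k
    & forall e k, \sum_i A0 e i * c i k = 0].
Proof.
elim: n => [|n IH] I A0 u hA0 hu hsum.
  exists #|I|, (fun i k => ((enum_rank i == k)%:R : S)), (fun k => u (enum_val k)); split.
  - by move=> i k; exact: sr_nat.
  - by move=> k.
  - move=> i; rewrite (bigD1 (enum_rank i)) //= eqxx mul1r enum_rankK big1 ?addr0 // => k hk.
    by rewrite eq_sym (negbTE hk) mul0r.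
  - move=> e; exfalso; have := ltn_ord e; by rewrite ltn0.
pose r := A0 ord0.
have [j|j||m [y [c0 [hy hc0 hx hs]]]] := @Hf #|I| (fun j => r (enum_val j)) (fun j => u (enum_val j)).
- exact: hA0.
- exact: hu.
- by rewrite (sum_enum (fun i => r i * u i)); exact: hsum.
pose c1 := fun i k => c0 (enum_rank i) k.
have hu1 : forall i, u i = \sum_k c1 i k * y k.
  by move=> i; rewrite -[in LHS](enum_rankK i); exact: hx.
have hr1 : forall k, \sum_i r i * c1 i k = 0.
  move=> k; rewrite -sum_enum -[RHS](hs k); apply: eq_bigr => j _.
  by rewrite /c1 enum_valK.
have [||| K [c2 [b [hc2 hb hy2 hrow2]]]] := IH 'I_m
    (fun e k1 => \sum_i A0 (lift ord0 e) i * c1 i k1) y.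
- move=> e k1; apply: sr_sum => // i _; apply: srM => //; exact: hc0.
- exact: hy.
- move=> e; rewrite -[RHS](hsum (lift ord0 e)) -sum_swap.
  by apply: eq_bigr => i _; rewrite -hu1.
exists K, (fun i k => \sum_k1 c1 i k1 * c2 k1 k), b; split.
- move=> i k; apply: sr_sum => // k1 _; apply: srM => //; exact: hc0.
- exact: hb.
- by move=> i; rewrite hu1 -sum_swap; apply: eq_bigr => k1 _; rewrite -hy2.
- move=> e k; case: (unliftP ord0 e) => [e'|] ->.
    rewrite (sum_swap (fun i => A0 (lift ord0 e') i) c1 (fun k1 => c2 k1 k)).
    exact: hrow2.
  rewrite (sum_swap (fun i => A0 ord0 i) c1 (fun k1 => c2 k1 k)).
  by rewrite big1 // => k1 _; rewrite hr1 mul0r.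
Qed.
End SysFlat.
Section EpiA.
Variable S : comPzRingType.
Hypothesis S10 : (1 : S) != 0.
Local Notation NZ := (NZt S10).
Variable R : S -> Prop.
Hypothesis HR : is_subring R.
Variable x : NZ.
Local Notation B := (@RX S S10 R x).

Definition pB : pred NZ := fun s => `[< B s >].
Lemma pB_closed : subring_closed pB.
Proof.
have hB := @RX_sub S S10 R HR x.
split; rewrite /pB.
- by apply/asboolP; exact: sr1.
- by move=> a b /asboolP ha /asboolP hb; apply/asboolP; exact: srB.
- by move=> a b /asboolP ha /asboolP hb; apply/asboolP; exact: srM.
Qed.
HB.instance Definition _ := GRing.isSubringClosed.Build NZ pB pB_closed.
Definition Bt := {s : NZ | pB s}.
HB.instance Definition _ := [isSub of Bt for @proj1_sig NZ pB].
HB.instance Definition _ := [Choice of Bt by <:].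
HB.instance Definition _ := [SubChoice_isSubComNzRing of Bt by <:].

Definition toBt (P : {poly NZ}) : {poly Bt} := map_poly (insubd (0 : Bt)) P.
Definition coefR (P : {poly NZ}) := forall i, R P`_i.

Lemma RB r : R r -> pB r.
Proof. by move=> hr; apply/asboolP; exact: R_RX. Qed.

Lemma insubdK s : pB s -> val (insubd (0 : Bt) s) = s.
Proof. by move=> h; rewrite val_insubd h. Qed.

Lemma insubd0 : insubd (0 : Bt) 0 = 0.
Proof. apply: val_inj; rewrite insubdK; last exact: rpred0. by rewrite rmorph0. Qed.

Lemma toBtK P : coefR P -> map_poly val (toBt P) = P.
Proof.
move=> hP; apply/polyP => i; rewrite coef_map /toBt coef_map_id0 ?insubd0 //.
exact: insubdK (RB (hP i)).
Qed.

Lemma mvM p q : map_poly (val : Bt -> NZ) (p * q) = map_poly val p * map_poly val q.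
Proof. exact: rmorphM. Qed.
Lemma mvD p q : map_poly (val : Bt -> NZ) (p + q) = map_poly val p + map_poly val q.
Proof. exact: rmorphD. Qed.
Lemma mvB p q : map_poly (val : Bt -> NZ) (p - q) = map_poly val p - map_poly val q.
Proof. exact: rmorphB. Qed.
Lemma mv1 : map_poly (val : Bt -> NZ) 1 = 1.
Proof. exact: rmorph1. Qed.
Lemma mv_sum (I : Type) (r : seq I) (F : I -> {poly Bt}) :
  map_poly (val : Bt -> NZ) (\sum_(i <- r) F i) = \sum_(i <- r) map_poly val (F i).
Proof. exact: rmorph_sum. Qed.

Lemma mapv_inj : injective (map_poly (val : Bt -> NZ)).
Proof. by apply: map_inj_poly; [exact: val_inj| rewrite rmorph0]. Qed.

Lemma coefR_D P Q : coefR P -> coefR Q -> coefR (P + Q).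
Proof. by move=> hP hQ i; rewrite coefD; exact: srD. Qed.
Lemma coefR_M P Q : coefR P -> coefR Q -> coefR (P * Q).
Proof. by move=> hP hQ i; rewrite coefM; apply: sr_sum => // j _; exact: srM. Qed.
Lemma coefR_C (r : NZ) : R r -> coefR r%:P.
Proof. by move=> hr i; rewrite coefC; case: (i == 0)%N => //; exact: sr0. Qed.
Lemma coefR_1 : coefR 1.
Proof. by move=> i; rewrite coef1; exact: sr_nat. Qed.
Lemma coefR_X : coefR 'X.
Proof. by move=> i; rewrite coefX; exact: sr_nat. Qed.

Lemma toBtD P Q : coefR P -> coefR Q -> toBt (P + Q) = toBt P + toBt Q.
Proof.
move=> hP hQ; apply: mapv_inj; rewrite mvD !toBtK //; exact: coefR_D hP hQ.
Qed.
Lemma toBtM P Q : coefR P -> coefR Q -> toBt (P * Q) = toBt P * toBt Q.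
Proof.
move=> hP hQ; apply: mapv_inj; rewrite mvM !toBtK //; exact: coefR_M hP hQ.
Qed.
Lemma toBt1 : toBt 1 = 1.
Proof. by apply: mapv_inj; rewrite mv1 toBtK //; exact: coefR_1. Qed.
Lemma toBtX : toBt 'X = 'X.
Proof. by apply: mapv_inj; rewrite map_polyX toBtK //; exact: coefR_X. Qed.
Lemma toBtC (r : NZ) : R r -> toBt r%:P = (insubd (0 : Bt) r)%:P.
Proof.
move=> hr; apply: mapv_inj; rewrite map_polyC toBtK; last exact: coefR_C hr.
by rewrite /= insubdK //; exact: RB hr.
Qed.

Definition Kset (q : {poly Bt}) := (forall i, R (val q`_i)) /\ (map_poly val q).[x] = 0.
Definition Jp (P : {poly Bt}) := exists s : seq (Bt * {poly Bt}),
  (forall hq, hq \in s -> Kset hq.2) /\ P = \sum_(hq <- s) hq.1%:P * hq.2.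

Lemma Kset_diff P Q : coefR P -> coefR Q -> P.[x] = Q.[x] -> Kset (toBt P - toBt Q).
Proof.
move=> hP hQ hPQ; split.
  by move=> i; rewrite -coef_map mvB !toBtK // coefB; exact: srB.
by rewrite mvB !toBtK // hornerD hornerN hPQ subrr.
Qed.

Lemma Jp_single q : Kset q -> Jp q.
Proof.
move=> hq; exists [:: (1, q)]; split; first by move=> hq'; rewrite inE => /eqP ->.
by rewrite big_cons big_nil addr0 mul1r.
Qed.

Lemma Jp0 : Jp 0.
Proof. by exists [::]; split => //; rewrite big_nil. Qed.

Lemma Jp_add P Q : Jp P -> Jp Q -> Jp (P + Q).
Proof.
move=> [s [hs ->]] [t [ht ->]]; exists (s ++ t); split; last by rewrite big_cat.
by move=> hq; rewrite mem_cat => /orP [/hs|/ht].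
Qed.

Lemma Kset_Xn n q : Kset q -> Kset ('X^n * q).
Proof.
move=> [hq1 hq2]; split.
  move=> i; rewrite coefXnM; case: (i < n)%N => //; rewrite rmorph0; exact: sr0.
by rewrite mvM hornerM map_polyXn hornerXn hq2 mulr0.
Qed.

Lemma Jp_mul a P : Jp P -> Jp (a * P).
Proof.
move=> [s [hs ->]].
exists [seq (a`_i * hq.1, 'X^i * hq.2) | i <- index_iota 0 (size a), hq <- s]; split.
  by move=> hq /allpairsP [[i hq'] [_ /hs h ->]] /=; exact: Kset_Xn.
rewrite big_allpairs_dep /= big_mkord -{1}[a]coefK poly_def mulr_suml; apply: eq_bigr => i _.
rewrite mulr_sumr; apply: eq_bigr => hq _.
by rewrite polyCM -mul_polyC; ring.
Qed.

Lemma mvC c : map_poly (val : Bt -> NZ) c%:P = (val c)%:P.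
Proof. exact: map_polyC. Qed.
Lemma mvX : map_poly (val : Bt -> NZ) 'X = 'X.
Proof. exact: map_polyX. Qed.

Hypothesis Hepi : is_epi R B.

Section Quot.
Local Open Scope quotient_scope.
Hypothesis hJ1 : ~ Jp 1.
Definition Jb : {pred {poly Bt}} := fun P => `[< Jp P >].
Lemma Jb_closed : idealr_closed Jb.
Proof.
split.
- by apply/asboolP; exact: Jp0.
- by apply/negP => /asboolP.
- move=> a u v /asboolP hu /asboolP hv; apply/asboolP; exact: Jp_add (Jp_mul a hu) hv.
Qed.
HB.instance Definition _ := isIdealr.Build {poly Bt} Jb Jb_closed.
Definition Tq := {ideal_quot Jb}.

Definition g0 (s : NZ) : {poly NZ} :=
  match pselect (B s) with left h => projT1 (cid h) | right _ => 0 end.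
Lemma g0P s : B s -> coefR (g0 s) /\ s = (g0 s).[x].
Proof. by rewrite /g0; case: pselect => // h _; exact: projT2 (cid h). Qed.

Definition fq (s : NZ) : Tq := \pi_Tq ((insubd (0 : Bt) s)%:P).
Definition gq (s : NZ) : Tq := \pi_Tq (toBt (g0 s)).

Lemma pi_eq P Q : Jp (P - Q) -> \pi_Tq P = \pi_Tq Q.
Proof. by move=> h; apply/eqP; rewrite -Quotient.idealrBE; apply/asboolP. Qed.

Lemma gK s P : coefR P -> s = P.[x] -> gq s = \pi_Tq (toBt P).
Proof.
move=> hP hs; have hB : B s by exists P.
have [h1 h2] := g0P hB.
rewrite /gq; apply: pi_eq; apply: Jp_single; apply: Kset_diff => //.
by rewrite -h2 -hs.
Qed.

Lemma pBB s : B s -> pB s. Proof. by move=> h; apply/asboolP. Qed.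

Lemma insubdD s t : B s -> B t -> insubd (0 : Bt) (s + t) = insubd 0 s + insubd 0 t.
Proof.
move=> hs ht; apply: val_inj; rewrite rmorphD /= !insubdK //; try exact: pBB.
by apply: pBB; exact: srD (@RX_sub S S10 R HR x) _ _ hs ht.
Qed.
Lemma insubdM s t : B s -> B t -> insubd (0 : Bt) (s * t) = insubd 0 s * insubd 0 t.
Proof.
move=> hs ht; apply: val_inj; rewrite rmorphM /= !insubdK //; try exact: pBB.
by apply: pBB; exact: srM (@RX_sub S S10 R HR x) _ _ hs ht.
Qed.
Lemma insubd1 : insubd (0 : Bt) 1 = 1.
Proof. apply: val_inj; rewrite insubdK; last exact: rpred1. by rewrite [RHS]rmorph1. Qed.

Lemma f_morph : morph_on B fq.
Proof.
split.
- by rewrite /fq insubd1 rmorph1.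
- by move=> s t hs ht; rewrite /fq insubdD // polyCD rmorphD.
- by move=> s t hs ht; rewrite /fq insubdM // polyCM rmorphM.
Qed.

Lemma g_morph : morph_on B gq.
Proof.
split.
- rewrite (@gK 1 1); last by rewrite hornerC.
    by have -> : toBt 1 = 1 := toBt1; rewrite rmorph1.
  exact: coefR_1.
- rewrite /RX; move=> _ _ [P [hP ->]] [Q [hQ ->]].
  rewrite (@gK _ (P + Q)) ?hornerD ?(@gK P.[x] P) ?(@gK Q.[x] Q) //; last exact: coefR_D.
  by rewrite toBtD // rmorphD.
- rewrite /RX; move=> _ _ [P [hP ->]] [Q [hQ ->]].
  rewrite (@gK _ (P * Q)) ?hornerM ?(@gK P.[x] P) ?(@gK Q.[x] Q) //; last exact: coefR_M.
  by rewrite toBtM // rmorphM.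
Qed.

Lemma fg_R r : R r -> fq r = gq r.
Proof.
move=> hr; rewrite (@gK r (r : NZ)%:P) ?hornerC //; last exact: coefR_C.
by rewrite toBtC.
Qed.

Lemma Jp_main : Jp ('X - (insubd (0 : Bt) x)%:P).
Proof.
have := Hepi f_morph g_morph fg_R (@RX_x S S10 R HR x).
rewrite (@gK x 'X) ?hornerX //; last exact: coefR_X.
rewrite toBtX /fq => h.
have : ('X - (insubd (0 : Bt) x)%:P) \in Jb by rewrite Quotient.idealrBE; apply/eqP; rewrite h.
by move/asboolP.
Qed.
End Quot.

Lemma Jp_X : Jp ('X - (insubd (0 : Bt) x)%:P).
Proof.
case: (classic (Jp 1)) => h; last exact: Jp_main.
by have := Jp_mul ('X - (insubd (0 : Bt) x)%:P) h; rewrite mulr1.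
Qed.

Lemma epi_poly : exists s : seq (NZ * {poly NZ}),
  (forall hq, hq \in s -> [/\ B hq.1, coefR hq.2 & hq.2.[x] = 0]) /\
  'X - x%:P = \sum_(hq <- s) hq.1%:P * hq.2.
Proof.
have [s [hs hE]] := Jp_X.
exists [seq (val hq.1, map_poly val hq.2) | hq <- s]; split.
  move=> _ /mapP [hq hqs ->] /=; have [h1 h2] := hs _ hqs; split => //.
    by have /asboolP := valP hq.1.
  by move=> i; rewrite coef_map_id0 //; exact: h1.
have := congr1 (map_poly (val : Bt -> NZ)) hE.
rewrite mvB mvX mvC insubdK; last by apply: pBB; exact: RX_x.
by move=> ->; rewrite mv_sum big_map; apply: eq_bigr => hq _; rewrite mvM mvC.
Qed.
End EpiA.
Section Descent.
Variable S : comPzRingType.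
Hypothesis S10 : (1 : S) != 0.
Local Notation NZ := (NZt S10).
Variable R : S -> Prop.
Hypothesis HR : is_subring R.
Variable x : NZ.
Local Notation B := (@RX S S10 R x).
Hypothesis Hflat : is_flat R B.
Hypothesis Hepi : is_epi R B.

Lemma sum2 (L : nat) (G : nat -> S) :
  \sum_(i < L.+2) G i = G 0%N + G 1%N + \sum_(l < L) G l.+2.
Proof.
by rewrite big_ord_recl big_ord_recl addrA.
Qed.

Lemma size_le_sum (s : seq (NZ * {poly NZ})) hq :
  hq \in s -> (size hq.2 <= \sum_(hq' <- s) size hq'.2)%N.
Proof.
elim: s => [//|a s IH]; rewrite inE big_cons => /orP [/eqP ->|/IH h].
  exact: leq_addr.
exact: leq_trans h (leq_addl _ _).
Qed.

Lemma stepA : Aprop R x.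
Proof.
have [s [hs hE]] := epi_poly HR Hepi.
set L := size s.
pose hN (l : nat) : NZ := (nth (0, 0) s l).1.
pose qN (l : nat) : {poly NZ} := (nth (0, 0) s l).2.
have hsl : forall l, (l < L)%N -> [/\ B (hN l), coefR R (qN l) & (qN l).[x] = 0].
  by move=> l hl; apply: hs; exact: mem_nth.
pose N := (\sum_(hq <- s) size hq.2 + 2)%N.
have sq : forall l, (l < L)%N -> (size (qN l) + 2 <= N)%N.
  by move=> l hl; rewrite leq_add2r; apply: size_le_sum; exact: mem_nth.
pose uN (i : nat) : NZ := if i == 0%N then 1 else if i == 1%N then x else hN (i - 2)%N.
pose AN (d i : nat) : NZ := if i == 0%N then - ((d == 1%N)%:R) else
   if i == 1%N then ((d == 0%N)%:R) else (qN (i - 2)%N)`_d.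
have hcoef : forall d, \sum_(l < L) hN l * (qN l)`_d = (('X - x%:P) : {poly NZ})`_d.
  move=> d; rewrite hE coef_sum (big_nth (0, 0)) big_mkord; apply: eq_bigr => l _.
  by rewrite coefCM.
have [||| K [c [b [hc hb hu hrow]]]] := @sysflat S R B HR Hflat N 'I_L.+2
   (fun d i => AN d i) (fun i => uN i).
- move=> d [[|[|i]] hi]; rewrite /AN /=.
  + by apply: srN => //; exact: sr_nat.
  + exact: sr_nat.
  + have hi' : (i < L)%N by lia.
    have -> : (i.+2 - 2 = i)%N by lia.
    by have [_ h _] := hsl _ hi'; exact: h.
- move=> [[|[|i]] hi]; rewrite /uN /=.
  + exact: sr1 (RX_sub HR x).
  + exact: RX_x.
  + have hi' : (i < L)%N by lia.
    have -> : (i.+2 - 2 = i)%N by lia.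
    by have [h _ _] := hsl _ hi'; exact: h.
- move=> d; rewrite (sum2 L (fun i => AN d i * uN i)) /AN /uN /=.
  under eq_bigr => l _ do rewrite subSS subSS subn0 mulrC.
  rewrite hcoef coefB coefX coefC mulr1.
  case: (d : nat) => [|[|d']] /=; rewrite ?mulr0n ?mulr1n ?oppr0 ?mul0r ?mulr0; ring.
exists K, (fun k => c ord0 k), b; split; last by rewrite -(hu ord0).
move=> k; split => //.
pose cN (i : nat) : NZ := c (inord i) k.
have hrow' : forall d, (d < N)%N ->
    AN d 0%N * cN 0%N + AN d 1%N * cN 1%N + \sum_(l < L) AN d l.+2 * cN l.+2 = 0.
  move=> d hd; rewrite -(sum2 L (fun i => AN d i * cN i)) -[RHS](hrow (Ordinal hd) k).
  by apply: eq_bigr => i _; rewrite /cN inord_val.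
pose Pk : {poly NZ} := - (cN 0%N *: 'X) + (cN 1%N)%:P + \sum_(l < L) cN l.+2 *: qN l.
have Pk0 : Pk = 0.
  apply/polyP => d; rewrite coef0 /Pk coefD coefD coefN coefZ coefX coefC coef_sum.
  under eq_bigr => l _ do rewrite coefZ.
  case: (ltnP d N) => hd.
    rewrite -[RHS](hrow' d hd) /AN /=.
    under [in RHS]eq_bigr => l _ do rewrite subSS subSS subn0 mulrC.
    by case: d hd => [|[|d']] hd /=; rewrite ?mulr0n ?mulr1n ?oppr0 ?mul0r ?mulr0; ring.
  rewrite big1; last first.
    move=> l _; rewrite nth_default ?mulr0 //.
    move: (sq l (ltn_ord l)) => h; apply: leq_trans hd; apply: leq_trans h; exact: leq_addr.
  have [d' ->] : exists d', d = d'.+2 by exists (d - 2)%N; lia.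
  by rewrite /= mulr0 oppr0 !addr0.
have := congr1 (fun P : {poly NZ} => P.[x]) Pk0.
rewrite /Pk /= hornerD hornerD hornerN hornerZ hornerX hornerC horner_sum horner0.
rewrite big1; last first.
  move=> l _; rewrite hornerZ; have [_ _ ->] := hsl l (ltn_ord l); exact: mulr0.
rewrite addr0 => h.
have e : cN 0%N * x = cN 1%N by rewrite -[RHS]subr0 -h; ring.
have -> : c ord0 k = cN 0%N by rewrite /cN; congr (c _ k); apply: val_inj; rewrite /= inordK.
by rewrite e /cN; exact: hc.
Qed.
End Descent.

Theorem mainTheorem5 (S : comPzRingType) (R : S -> Prop) :
  is_subring R -> is_local R -> is_flat R (fun _ => True) ->
  is_Prufer_hull R (large_quotient R (strong_divisor R)) /\
  same_set (large_quotient R (strong_divisor R))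
           (localization_in R (fun s => strong_divisor R s /\ unitS s)).
Proof.
move=> HR [M [HM Huniq]] Hflat.
have hS10 : (1 : S) != 0 := S10 HM.
split; last exact: loc_eq HR Hflat.
split.
- exact: H_sub HR.
- exact: R_H HR.
- exact: H_Prufer HR Hflat.
move=> T hT RT hPT.
apply: (Lmax HR hT RT).
apply: (@V_T S hS10 R M HR HM Huniq T hT RT) => y hy.
have [hf he] := hPT _ (@RX_sub S hS10 R HR y) (@R_RX S hS10 R HR y) (@RX_T S hS10 R y T hT RT hy).
exact: (@stepA S hS10 R HR y hf he).
Qed.
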